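(* Let $m,k,s$ be positive integers with $s\ge k$, and $\Sigma_W\in\mathbb{R}^{k\times k}$ symmetric positive definite with symmetric positive-definite square root $\Sigma_W^{1/2}$. On $\mathcal{Z}=\mathbb{R}^{m+s}\times\mathbb{R}^{(m+s)\times k}$, write $z=(y_x,y_\perp,w_x,w_\perp)$ with $y_x\in\mathbb{R}^m,y_\perp\in\mathbb{R}^s,w_x\in\mathbb{R}^{m\times k},w_\perp\in\mathbb{R}^{s\times k}$. For any $p\in\mathbb{R}$, define (wherever $w_\perp$ has full column rank and $\hat\gamma^{\mathrm{OLS}}\neq 0$) $$\hat\gamma^{\mathrm{OLS}}=(w_\perp'w_\perp)^{-1}w_\perp'y_\perp,\quad \hat\gamma=\left(1-p\,\frac{y_\perp'y_\perp-\|\hat\gamma^{\mathrm{OLS}}\|^2_{w_\perp'w_\perp}}{\|\hat\gamma^{\mathrm{OLS}}\|^2_{w_\perp'w_\perp}}\right)\hat\gamma^{\mathrm{OLS}},\quad d(z)=y_x-w_x\hat\gamma\in\mathbb{R}^m.$$ Let $G=\mathbb{R}^m\times O(m)\times O(k)\times O(s)$ act by $m_{\mathcal{Z}}(g,(y_x,y_\perp,w_x,w_\perp))=(g_xy_x+g_\mu,\ g_\perp y_\perp,\ g_xw_x\Sigma_W^{-1/2}g_W'\Sigma_W^{1/2},\ g_\perp w_\perp\Sigma_W^{-1/2}g_W'\Sigma_W^{1/2})$ on $\mathcal{Z}$ and $m_{\mathcal{A}}(g,a)=g_xa+g_\mu$ on $\mathcal{A}=\mathbb{R}^m$, for $g=(g_\mu,g_x,g_W,g_\perp)$.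 Then $d$ is invariant: $d(m_{\mathcal{Z}}(g,z))=m_{\mathcal{A}}(g,d(z))$ for all $g\in G$ and all $z$ in the domain of $d$.
   Context: $\|v\|_A=\sqrt{v'Av}$. $O(d)$ is the group of orthogonal $d\times d$ matrices. The map $d$ is the canonical-coordinate form of the paper's two-step shrinkage estimator of $\mu_x=q_x'x\beta$: with $s=n-m-1$, $y_x=q_x'Y$, $y_\perp=q_\perp'Y$, $w_x=q_x'W$, $w_\perp=q_\perp'W$ for an orthonormal basis $(q_{\mathbf{1}},q_x,q_\perp)$ of $\mathbb{R}^n$ adapted to $(\mathbf{1}_n,x)$, and $y_\perp'y_\perp-\|\hat\gamma^{\mathrm{OLS}}\|^2_{w_\perp'w_\perp}$ equals the sum of squared residuals of the regression of $Y$ on $\mathbf{1},X,W$. *)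

(* Defs.v *)
From HB Require Import structures.
From mathcomp Require Import all_boot all_order all_algebra.
From mathcomp Require Import reals.
Set Implicit Arguments. Unset Strict Implicit. Unset Printing Implicit Defensive.
Import Order.TTheory GRing.Theory Num.Theory.
Local Open Scope ring_scope.

Definition posdef (R : realType) (n : nat) (A : 'M[R]_n) : Prop :=
  A^T = A /\ forall v : 'cV[R]_n, v != 0 -> 0 < (v^T *m A *m v) ord0 ord0.

Definition orthogonal_mx (R : realType) (n : nat) (A : 'M[R]_n) : Prop :=
  A *m A^T = 1%:M.

Definition sqnormA (R : realType) (n : nat) (A : 'M[R]_n) (v : 'cV[R]_n) : R :=
  (v^T *m A *m v) ord0 ord0.

Definition gammaOLS (R : realType) (s k : nat) (yp : 'cV[R]_s) (wp : 'M[R]_(s, k))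
  : 'cV[R]_k := invmx (wp^T *m wp) *m (wp^T *m yp).

Definition gammaHat (R : realType) (s k : nat) (p : R) (yp : 'cV[R]_s)
  (wp : 'M[R]_(s, k)) : 'cV[R]_k :=
  let g := gammaOLS yp wp in
  let q := sqnormA (wp^T *m wp) g in
  (1 - p * (((yp^T *m yp) ord0 ord0 - q) / q)) *: g.

Definition d_est (R : realType) (m s k : nat) (p : R) (yx : 'cV[R]_m)
  (yp : 'cV[R]_s) (wx : 'M[R]_(m, k)) (wp : 'M[R]_(s, k)) : 'cV[R]_m :=
  yx - wx *m gammaHat p yp wp.

(* Main.v *)
Require Import Defs.
From HB Require Import structures.
From mathcomp Require Import all_boot all_order all_algebra.
From mathcomp Require Import reals.
Import Order.TTheory GRing.Theory Num.Theory.
Local Open Scope ring_scope.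

Lemma unit_of_ker (R : realType) n (A : 'M[R]_n) :
  (forall u : 'rV[R]_n, u *m A = 0 -> u = 0) -> A \in unitmx.
Proof.
move=> H; rewrite -row_free_unit -kermx_eq0; apply/eqP/row_matrixP => i.
by rewrite row0; apply: H; rewrite -row_mul mulmx_ker row0.
Qed.

Lemma sq_eq0 (R : realType) s (x : 'rV[R]_s) : (x *m x^T) ord0 ord0 = 0 -> x = 0.
Proof.
rewrite mxE => H; apply/rowP => j; rewrite mxE.
have hp : forall i : 'I_s, true -> 0 <= x ord0 i * x^T i ord0.
  by move=> i _; rewrite mxE -expr2 sqr_ge0.
have := psumr_eq0P hp H (i:=j) isT.
by rewrite mxE => /eqP; rewrite mulf_eq0 orbb => /eqP.
Qed.

Lemma gOLS_inv (R : realType) s k (U : 'M[R]_s) (M : 'M[R]_k) (yp : 'cV[R]_s)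
  (wp : 'M[R]_(s, k)) :
  U^T *m U = 1%:M -> M \in unitmx -> wp^T *m wp \in unitmx ->
  gammaOLS (U *m yp) (U *m wp *m M) = invmx M *m gammaOLS yp wp.
Proof.
move=> hU hM hA; rewrite /gammaOLS.
have e1 : (U *m wp *m M)^T *m (U *m wp *m M) = M^T *m (wp^T *m wp) *m M.
  by rewrite !trmx_mul !mulmxA -(mulmxA _ U^T U) hU mulmx1.
have e2 : (U *m wp *m M)^T *m (U *m yp) = M^T *m (wp^T *m yp).
  by rewrite !trmx_mul !mulmxA -(mulmxA _ U^T U) hU mulmx1.
rewrite e1 e2.
have hB : M^T *m (wp^T *m wp) *m M \in unitmx.
  by rewrite !unitmx_mul unitmx_tr hM hA.
have e3 : M^T *m (wp^T *m wp) *m M *m (invmx M *m (invmx (wp^T *m wp) *m (wp^T *m yp)))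
   = M^T *m (wp^T *m yp).
  by rewrite !mulmxA mulmxK // -(mulmxA M^T wp^T wp) mulmxK // mulmxA.
by rewrite -{1}e3 mulKmx.
Qed.

Lemma gHat_inv (R : realType) s k (p : R) (U : 'M[R]_s) (M : 'M[R]_k) (yp : 'cV[R]_s)
  (wp : 'M[R]_(s, k)) :
  U^T *m U = 1%:M -> M \in unitmx -> wp^T *m wp \in unitmx ->
  gammaHat p (U *m yp) (U *m wp *m M) = invmx M *m gammaHat p yp wp.
Proof.
move=> hU hM hA; rewrite /gammaHat gOLS_inv //.
have e1 : (U *m wp *m M)^T *m (U *m wp *m M) = M^T *m (wp^T *m wp) *m M.
  by rewrite !trmx_mul !mulmxA -(mulmxA _ U^T U) hU mulmx1.
have e2 : (U *m yp)^T *m (U *m yp) = yp^T *m yp.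
  by rewrite !trmx_mul !mulmxA -(mulmxA _ U^T U) hU mulmx1.
have e3 : sqnormA (M^T *m (wp^T *m wp) *m M) (invmx M *m gammaOLS yp wp)
  = sqnormA (wp^T *m wp) (gammaOLS yp wp).
  rewrite /sqnormA trmx_mul trmx_inv !mulmxA mulmxKV ?unitmx_tr //.
  by rewrite mulmxK.
by rewrite e1 e2 e3 scalemxAr.
Qed.

Theorem mainTheorem6 (R : realType) (m k s : nat)
  (hm : (0 < m)%N) (hk : (0 < k)%N) (hks : (k <= s)%N)
  (SigW SigWhalf : 'M[R]_k)
  (hSig : posdef SigW) (hhalf : posdef SigWhalf) (hsq : SigWhalf *m SigWhalf = SigW)
  (p : R)
  (gmu : 'cV[R]_m) (gx : 'M[R]_m) (gW : 'M[R]_k) (gp : 'M[R]_s)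
  (hgx : orthogonal_mx gx) (hgW : orthogonal_mx gW) (hgp : orthogonal_mx gp)
  (yx : 'cV[R]_m) (yp : 'cV[R]_s) (wx : 'M[R]_(m, k)) (wp : 'M[R]_(s, k))
  (hrank : \rank wp = k) (hols : gammaOLS yp wp != 0) :
  d_est p (gx *m yx + gmu) (gp *m yp)
        (gx *m wx *m invmx SigWhalf *m gW^T *m SigWhalf)
        (gp *m wp *m invmx SigWhalf *m gW^T *m SigWhalf)
  = gx *m d_est p yx yp wx wp + gmu.
Proof.
have hS : SigWhalf \in unitmx.
  apply: unit_of_ker => u hu; apply/eqP; apply/negPn/negP => hu0.
  case: hhalf => _ /(_ u^T); rewrite trmx_eq0 => /(_ hu0).
  by rewrite trmxK hu mul0mx mxE ltxx.
have hW : gW \in unitmx by case: (mulmx1_unit hgW).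
have hU : gp^T *m gp = 1%:M by apply: mulmx1C.
have hA : wp^T *m wp \in unitmx.
  apply: unit_of_ker => u hu.
  have hf : row_free wp^T by rewrite /row_free mxrank_tr hrank.
  apply: (row_free_inj hf); rewrite mul0mx; apply: sq_eq0.
  by rewrite trmx_mul trmxK mulmxA -(mulmxA u) hu mul0mx mxE.
set M := invmx SigWhalf *m gW^T *m SigWhalf.
have hM : M \in unitmx by rewrite /M !unitmx_mul unitmx_inv unitmx_tr hS hW.
have -> : gp *m wp *m invmx SigWhalf *m gW^T *m SigWhalf = gp *m wp *m M.
  by rewrite /M !mulmxA.
have -> : gx *m wx *m invmx SigWhalf *m gW^T *m SigWhalf = gx *m wx *m M.
  by rewrite /M !mulmxA.
rewrite /d_est gHat_inv // mulmxA mulmxK // mulmxBr !mulmxA.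
by rewrite addrAC.
Qed.
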